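(* Let $V\in\mathcal{UM}$ with $\deg(V,0)=2$, let $\gamma,\bar\gamma\ge0$ with $\gamma+\bar\gamma>0$, and let $U(x)=\gamma W'(x)+\bar\gamma W'(-x)$. If the function $\gamma a+\bar\gamma\bar a:(0,\infty)\to\mathbb R$ has a real-analytic extension to $[0,\infty)$ (i.e. to an open set containing $[0,\infty)$), then $U$ is even. If moreover $V$ is not even, then $\gamma=\bar\gamma$.
   Context: $\mathcal{UM}$: real-analytic $V:\mathbb R\to\mathbb R_{\ge0}$ with $V(0)=0$, $yV'(y)>0$ for $y\neq0$, $V(y)\to\infty$ as $y\to\pm\infty$; $\deg(V,0)$ is the least $m$ with $V^{(m)}(0)\ne0$. For $\deg(V,0)=2$, $V_*$ is the bi-analytic map with $V_*'>0$ and $V_*^2=V$, and $W=V_*^{-1}$. $\bar V(y)=V(-y)$; $V^{-1}$ is the inverse of $V|_{[0,\infty)}$. $a(\theta)=\int_0^{V^{-1}(\theta)}\frac{dy}{\sqrt2\sqrt{\theta-V(y)}}$ and $\bar a(\theta)=\int_0^{\bar V^{-1}(\theta)}\frac{dy}{\sqrt2\sqrt{\theta-\bar V(y)}}$ for $\theta>0$; equivalently $\gamma a(\theta)+\bar\gamma\bar a(\theta)=\frac1{\sqrt2}\int_0^1\frac{U(\sqrt\theta s)}{\sqrt{1-s^2}}ds$. *)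

(* Defs.v *)
From Stdlib Require Import Reals ClassicalEpsilon.
From Coquelicot Require Import Coquelicot.
Open Scope R_scope.

Definition analytic_at (f : R -> R) (x0 : R) : Prop :=
  exists r : R, 0 < r /\ exists c : nat -> R,
    forall x, Rabs (x - x0) < r -> is_pseries c (x - x0) (f x).

Definition analytic_on (D : R -> Prop) (f : R -> R) : Prop :=
  forall x, D x -> analytic_at f x.

Definition UM (V : R -> R) : Prop :=
  analytic_on (fun _ => True) V /\
  (forall y, 0 <= V y) /\
  V 0 = 0 /\
  (forall y, y <> 0 -> 0 < y * Derive V y) /\
  is_lim V p_infty p_infty /\
  is_lim V m_infty p_infty.

Definition deg_at0 (V : R -> R) (m : nat) : Prop :=
  Derive_n V m 0 <> 0 /\ (forall k, (k < m)%nat -> Derive_n V k 0 = 0).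

Definition Vbar (V : R -> R) : R -> R := fun y => V (- y).

Definition Vinv (V : R -> R) (theta : R) : R :=
  epsilon (inhabits 0) (fun y => 0 <= y /\ V y = theta).

(* a(theta) = int_0^{V^{-1}(theta)} dy / (sqrt 2 sqrt(theta - V y)),
   an improper integral (singular at the upper endpoint). *)
Definition a_fun (V : R -> R) (theta : R) : R :=
  RInt_gen (fun y => 1 / (sqrt 2 * sqrt (theta - V y)))
           (at_point 0) (at_left (Vinv V theta)).

(* Main.v *)
Require Import Defs.
From Stdlib Require Import Reals.
From Coquelicot Require Import Coquelicot.
Open Scope R_scope.
From Stdlib Require Import Lra Lia ClassicalEpsilon Classical.

Lemma is_derive_eq (f : R -> R) x l l' : is_derive f x l -> l = l' -> is_derive f x l'.
Proof. intros H ->; exact H. Qed.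

Lemma sum_term_le (f : nat -> R) N n : (forall k, 0 <= f k) -> (n <= N)%nat -> f n <= sum_f_R0 f N.
Proof.
  intros Hp. induction N; intros Hn.
  - assert (n = 0%nat) by lia. subst. simpl. lra.
  - destruct (Nat.eq_dec n (S N)) as [->|Hne].
    + simpl. pose proof (cond_pos_sum f N Hp). lra.
    + simpl. pose proof (IHN ltac:(lia)). pose proof (Hp (S N)). lra.
Qed.

Lemma rad_ge (a : nat -> R) x : ex_pseries a x -> Rbar_le (Rabs x) (CV_radius a).
Proof.
  intros H. apply ex_pseries_R in H.
  apply ex_series_lim_0 in H.
  destruct (CV_radius_bounded a) as [Hub _].
  apply Hub.
  apply is_lim_seq_spec in H.
  destruct (H (mkposreal 1 Rlt_0_1)) as [N HN].
  exists (1 + sum_f_R0 (fun k => Rabs (a k * x ^ k)) N).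
  intros n.
  replace (Rabs (a n * Rabs x ^ n)) with (Rabs (a n * x ^ n)) by (rewrite !Rabs_mult, RPow_abs, Rabs_Rabsolu; reflexivity).
  pose proof (cond_pos_sum (fun k => Rabs (a k * x ^ k)) N (fun k => Rabs_pos _)).
  destruct (Compare_dec.le_lt_dec N n) as [Hle|Hlt].
  - specialize (HN n Hle). simpl in HN. rewrite Rminus_0_r in HN. lra.
  - pose proof (sum_term_le (fun k => Rabs (a k * x ^ k)) N n (fun k => Rabs_pos _) ltac:(lia)).
    simpl in H1. lra.
Qed.

Lemma an_rad (f : R -> R) x0 r c :
  (forall x, Rabs (x - x0) < r -> is_pseries c (x - x0) (f x)) ->
  forall z, Rabs z < r -> Rbar_lt (Rabs z) (CV_radius c).
Proof.
  intros H z Hz.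
  set (z' := (Rabs z + r)/2).
  assert (Hz' : 0 <= z') by (unfold z'; pose proof (Rabs_pos z); lra).
  assert (Hle : Rbar_le (Rabs z') (CV_radius c)).
  { apply rad_ge. exists (f (z' + x0)).
    assert (Hp := H (z' + x0)).
    replace (z' + x0 - x0) with z' in Hp by ring.
    apply Hp. rewrite Rabs_pos_eq; unfold z' in *; lra. }
  rewrite Rabs_pos_eq in Hle by lra.
  destruct (CV_radius c) as [R0| |]; simpl in *; auto. unfold z' in Hle. lra.
Qed.

Lemma an_derive (f : R -> R) x0 r c :
  (forall x, Rabs (x - x0) < r -> is_pseries c (x - x0) (f x)) ->
  forall x, Rabs (x - x0) < r -> is_derive f x (PSeries (PS_derive c) (x - x0)).
Proof.
  intros H x Hx.
  apply is_derive_ext_loc with (fun t => PSeries c (t - x0)).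
  - assert (Hp : 0 < r - Rabs (x - x0)) by lra.
    exists (mkposreal _ Hp). intros y Hy. change (Rabs (y - x) < r - Rabs (x - x0)) in Hy.
    rewrite (is_pseries_unique c (y - x0) (f y)); [reflexivity|]. apply H.
    pose proof (Rabs_triang (y-x) (x-x0)). replace (y-x+(x-x0)) with (y-x0) in H0 by ring. lra.
  - apply is_derive_eq with (scal 1 (PSeries (PS_derive c) (x - x0))).
    + apply (is_derive_comp (PSeries c) (fun t => t - x0)).
      * apply is_derive_PSeries. apply (an_rad f x0 r c H); auto.
      * auto_derive; auto.
    + unfold scal; simpl; unfold mult; simpl; ring.
Qed.

Definition AN (f : R -> R) := forall x, analytic_at f x.

Lemma an_Derive f : AN f -> AN (Derive f).
Proof.
  intros H x0. destruct (H x0) as [r [Hr [c Hc]]].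
  exists r. split; auto. exists (PS_derive c). intros x Hx.
  rewrite (is_derive_unique _ _ _ (an_derive f x0 r c Hc x Hx)).
  apply PSeries_correct. apply CV_radius_inside. rewrite CV_radius_derive.
  apply (an_rad f x0 r c Hc). auto.
Qed.

Lemma AN_ex_derive f x : AN f -> ex_derive f x.
Proof.
  intros H. destruct (H x) as [r [Hr [c Hc]]].
  eexists. apply (an_derive f x r c Hc). rewrite Rminus_diag, Rabs_R0; auto.
Qed.

Lemma AN_is_derive f x : AN f -> is_derive f x (Derive f x).
Proof. intros H. apply Derive_correct, AN_ex_derive, H. Qed.

Lemma AN_cont f x : AN f -> continuous f x.
Proof. intros H. exact (ex_derive_continuous f x (AN_ex_derive f x H)). Qed.

Lemma AN_Dn f n : AN f -> AN (Derive_n f n).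
Proof.
  intros H. induction n. { exact H. }
  intros x0. exact (an_Derive _ IHn x0).
Qed.

Lemma Derive_n_trans (g : R -> R) a n t :
  Derive_n (fun t => g (t + a)) n t = Derive_n g n (t + a).
Proof.
  revert t. induction n; intros t. { reflexivity. }
  simpl. rewrite (Derive_ext _ (fun t => Derive_n g n (t + a))) by auto.
  unfold Derive. f_equal. apply Lim_ext. intros h.
  replace (t + h + a) with (t + a + h) by ring. reflexivity.
Qed.

Lemma an_coef f x0 r c :
  0 < r -> (forall x, Rabs (x - x0) < r -> is_pseries c (x - x0) (f x)) ->
  forall n, Derive_n f n x0 = c n * INR (Factorial.fact n).
Proof.
  intros Hr H n.
  rewrite (Derive_n_ext_loc f (fun t => PSeries c (t + - x0))).
  - transitivity (Derive_n (PSeries c) n (x0 + - x0)). { apply Derive_n_trans. }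
    replace (x0 + - x0) with 0 by ring.
    apply Derive_n_coef.
    pose proof (an_rad f x0 r c H 0). rewrite Rabs_R0 in H0. apply H0; auto.
  - exists (mkposreal r Hr). intros y Hy. change (Rabs (y - x0) < r) in Hy.
    symmetry. apply is_pseries_unique. apply H. auto.
Qed.

Lemma cont_eps (g : R -> R) x : continuous g x ->
  forall eps, 0 < eps -> exists d, 0 < d /\ forall y, Rabs (y - x) < d -> Rabs (g y - g x) < eps.
Proof.
  intros H eps He.
  destruct (proj1 (filterlim_locally g (g x)) H (mkposreal eps He)) as [d Hd].
  exists d. split. { apply cond_pos. }
  intros y Hy. apply (Hd y Hy).
Qed.

Lemma clopen_pos (Z : R -> Prop) :
  (forall x, Z x -> exists d, 0 < d /\ forall y, Rabs (y - x) < d -> Z y) ->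
  (forall x, (forall e, 0 < e -> exists y, Rabs (y - x) < e /\ Z y) -> Z x) ->
  Z 0 -> forall x, 0 <= x -> Z x.
Proof.
  intros Hop Hcl H0 x Hx.
  apply NNPP. intros Hnx.
  set (E := fun t => 0 <= t <= x /\ forall u, 0 <= u <= t -> Z u).
  assert (HE0 : E 0). { split. lra. intros u Hu. replace u with 0 by lra. auto. }
  assert (Hb : bound E). { exists x. intros t [Ht _]. lra. }
  destruct (completeness E Hb (ex_intro _ 0 HE0)) as [s [Hub Hlub]].
  assert (Hs0 : 0 <= s) by (apply Hub; auto).
  assert (Hsx : s <= x). { apply Hlub. intros t [Ht _]. lra. }
  assert (Hbelow : forall u, 0 <= u < s -> Z u).
  { intros u Hu. apply NNPP. intros Hnu.
    assert (s <= u). { apply Hlub. intros t [Ht Ht2]. destruct (Rle_lt_dec t u); auto.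
      exfalso. apply Hnu. apply Ht2. lra. }
    lra. }
  assert (Hzs : Z s).
  { apply Hcl. intros e He.
    destruct (Rlt_dec 0 s) as [Hpos|Hnpos].
    - exists (Rmax 0 (s - e/2)). split.
      + unfold Rmax; destruct Rle_dec; rewrite Rabs_left1 by lra; lra.
      + apply Hbelow. unfold Rmax; destruct Rle_dec; lra.
    - exists 0. replace s with 0 by lra. rewrite Rminus_0_r, Rabs_R0. auto. }
  destruct (Hop s Hzs) as [d [Hd Hdd]].
  assert (Hsx' : s < x). { destruct (Rle_lt_or_eq_dec _ _ Hsx); auto. subst. contradiction. }
  set (t := Rmin (s + d/2) x).
  assert (Et : E t).
  { split. { unfold t, Rmin; destruct Rle_dec; lra. }
    intros u Hu. destruct (Rlt_dec u s). { apply Hbelow; lra. }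
    apply Hdd. assert (t <= s + d/2) by (unfold t; apply Rmin_l).
    rewrite Rabs_pos_eq; lra. }
  assert (t <= s) by (apply Hub; auto).
  unfold t, Rmin in H; destruct Rle_dec in H; lra.
Qed.

Lemma clopen_all (Z : R -> Prop) :
  (forall x, Z x -> exists d, 0 < d /\ forall y, Rabs (y - x) < d -> Z y) ->
  (forall x, (forall e, 0 < e -> exists y, Rabs (y - x) < e /\ Z y) -> Z x) ->
  Z 0 -> forall x, Z x.
Proof.
  intros Hop Hcl H0 x.
  destruct (Rle_dec 0 x). { apply clopen_pos; auto. }
  replace x with (- (- x)) by ring.
  apply (clopen_pos (fun y => Z (- y))).
  - intros y Hy. destruct (Hop _ Hy) as [d [Hd Hdd]]. exists d. split; auto.
    intros z Hz. apply Hdd. rewrite <- Rabs_Ropp. replace (- (- z - - y)) with (z - y) by ring. auto.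
  - intros y Hy. apply Hcl. intros e He. destruct (Hy e He) as [z [Hz1 Hz2]].
    exists (- z). split; auto. rewrite <- Rabs_Ropp. replace (- (- z - - y)) with (z - y) by ring. auto.
  - rewrite Ropp_0; auto.
  - lra.
Qed.

Lemma AN_zero f : AN f -> (forall n, Derive_n f n 0 = 0) -> forall x, f x = 0.
Proof.
  intros Hf H0 x.
  set (Z := fun y => forall n, Derive_n f n y = 0).
  assert (HZ : forall y, Z y). 2: { exact (HZ x 0%nat). }
  apply clopen_all; auto.
  - intros x0 Hx0. destruct (Hf x0) as [r [Hr [c Hc]]].
    assert (Hc0 : forall n, c n = 0).
    { intros n. pose proof (an_coef f x0 r c Hr Hc n). rewrite Hx0 in H.
      pose proof (INR_fact_neq_0 n). symmetry in H; apply Rmult_integral in H. destruct H; auto. contradiction. }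
    exists r. split; auto. intros y Hy n.
    assert (Hd : 0 < r - Rabs (y - x0)) by lra.
    rewrite (Derive_n_ext_loc f (fun _ => 0)).
    + destruct n. reflexivity. apply Derive_n_const.
    + exists (mkposreal _ Hd). intros z Hz. change (Rabs (z - y) < r - Rabs (y - x0)) in Hz.
      assert (Hz' : Rabs (z - x0) < r).
      { pose proof (Rabs_triang (z-y) (y-x0)). replace (z-y+(y-x0)) with (z-x0) in H by ring. lra. }
      rewrite <- (is_pseries_unique _ _ _ (Hc z Hz')).
      rewrite (PSeries_ext _ (fun _ => 0)) by auto. apply PSeries_const_0.
  - intros x0 Hx0 n.
    pose proof (AN_cont (Derive_n f n) x0 (AN_Dn f n Hf)) as Hc.
    apply NNPP. intros Hne.
    assert (Hp : 0 < Rabs (Derive_n f n x0)) by (apply Rabs_pos_lt; auto).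
    destruct (cont_eps _ _ Hc _ Hp) as [d [Hd Hdd]].
    destruct (Hx0 d Hd) as [y [Hy Zy]].
    specialize (Hdd y Hy). rewrite (Zy n) in Hdd. rewrite Rminus_0_l, Rabs_Ropp in Hdd. lra.
Qed.

Lemma cR_mult (f g : R -> R) x : continuous f x -> continuous g x -> continuous (fun y => f y * g y) x.
Proof. intros. apply (continuous_mult f g x); auto. Qed.
Lemma cR_comp (f g : R -> R) x : continuous f x -> continuous g (f x) -> continuous (fun y => g (f y)) x.
Proof. intros. apply (continuous_comp f g x); auto. Qed.
Lemma cR_const (c x : R) : continuous (fun _ => c) x.
Proof. apply continuous_const. Qed.
Lemma cR_sin x : continuous sin x.
Proof. apply (ex_derive_continuous sin x). auto_derive; auto. Qed.
Lemma cR_cos x : continuous cos x.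
Proof. apply (ex_derive_continuous cos x). auto_derive; auto. Qed.
Lemma cR_pt (f : R -> R) x : continuity_pt f x -> continuous f x.
Proof. intros H. apply continuity_pt_filterlim; auto. Qed.
Lemma cR_sqrt x : 0 < x -> continuous sqrt x.
Proof. intros. apply cR_pt, continuity_pt_sqrt; lra. Qed.
Lemma cR_inv x : x <> 0 -> continuous Rinv x.
Proof. intros. apply (ex_derive_continuous Rinv x). auto_derive; auto. Qed.

Lemma incr_deriv (T T' : R -> R) : (forall x, is_derive T x (T' x)) -> (forall x, 0 < T' x) ->
  forall x y, x < y -> T x < T y.
Proof.
  intros H1 H2 x y Hxy. apply (incr_function T m_infty p_infty T'); simpl; auto.
  intros; apply Rlt_gt; auto.
Qed.

Lemma a_fun_subst (Vf T S S' : R -> R) (theta : R) :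
  0 < theta ->
  (forall y, Vf y = T y ^ 2) ->
  (forall y, S (T y) = y) -> (forall x, T (S x) = x) ->
  (forall x y, x < y -> T x < T y) ->
  (forall x y, x < y -> S x < S y) ->
  T 0 = 0 ->
  (forall x, continuous T x) ->
  (forall x, is_derive S x (S' x)) -> (forall x, continuous S' x) ->
  a_fun Vf theta = RInt (fun p => S' (sqrt theta * sin p) / sqrt 2) 0 (PI/2).
Proof.
  intros Hth HV HST HTS HTi HSi HT0 HTc HS HS'c. pose proof PI_RGT_0 as HPI.
  set (st := sqrt theta).
  assert (Hst : 0 < st) by (apply sqrt_lt_R0; auto).
  assert (Hst2 : st ^ 2 = theta) by (apply pow2_sqrt; lra).
  assert (HS0 : S 0 = 0) by (rewrite <- HT0 at 1; apply HST).
  assert (HTle : forall x y, x <= y -> T x <= T y).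
  { intros x y [H|H]. left; auto. rewrite H; lra. }
  assert (HSle : forall x y, x <= y -> S x <= S y).
  { intros x y [H|H]. left; auto. rewrite H; lra. }
  set (b := S st).
  assert (Hb0 : 0 < b) by (unfold b; rewrite <- HS0; apply HSi; auto).
  assert (HTb : T b = st) by apply HTS.
  assert (Hinv : Vinv Vf theta = b).
  { unfold Vinv.
    assert (Hex : exists y, 0 <= y /\ Vf y = theta).
    { exists b. split. lra. rewrite HV, HTb. auto. }
    destruct (epsilon_spec (inhabits 0) _ Hex) as [H1 H2].
    set (y := epsilon _ _) in *.
    assert (HTy : 0 <= T y) by (rewrite <- HT0; apply HTle; auto).
    rewrite HV in H2.
    assert (T y = st). { unfold st. rewrite <- H2. rewrite sqrt_pow2; auto. }
    rewrite <- (HST y), H. reflexivity. }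
  set (h := fun p => S' (st * sin p) / sqrt 2).
  set (f := fun y => 1 / (sqrt 2 * sqrt (theta - Vf y))).
  assert (Hsq2 : 0 < sqrt 2) by (apply sqrt_lt_R0; lra).
  assert (Hhc : forall p, continuous h p).
  { intros p. unfold h. apply cR_mult; [|apply cR_const].
    apply (cR_comp (fun p => st * sin p) S'). apply cR_mult. apply cR_const. apply cR_sin. apply HS'c. }
  set (Phi := fun x => RInt h 0 x).
  assert (HPhi : forall x, is_RInt h 0 x (Phi x)).
  { intros x. unfold Phi. apply (RInt_correct h 0 x). apply (ex_RInt_continuous h). intros; apply Hhc. }
  assert (Hfc : forall y, 0 <= y < b -> continuous f y).
  { intros y Hy.
    assert (HTy0 : 0 <= T y) by (rewrite <- HT0; apply HTle; lra).
    assert (HTyb : T y < st) by (rewrite <- HTb; apply HTi; lra).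
    assert (Hpos : 0 < theta - Vf y).
    { rewrite HV, <- Hst2. nra. }
    unfold f. apply cR_mult; [apply cR_const|].
    apply (cR_comp (fun y => sqrt 2 * sqrt (theta - Vf y)) Rinv).
    - apply cR_mult; [apply cR_const|].
      apply (cR_comp (fun y => theta - Vf y) sqrt).
      + apply (continuous_minus (fun _ => theta) Vf). apply cR_const.
        apply (continuous_ext (fun y => T y * (T y * 1))). { intros; rewrite HV; reflexivity. }
        apply cR_mult. apply HTc. apply cR_mult. apply HTc. apply cR_const.
      + apply cR_sqrt; auto.
    - apply cR_inv. apply Rgt_not_eq. apply Rmult_lt_0_compat; auto. apply sqrt_lt_R0; auto. }
  assert (Hsub : forall u, 0 <= u < b -> is_RInt f 0 u (Phi (asin (T u / st)))).
  { intros u Hu.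
    assert (HTu0 : 0 <= T u) by (rewrite <- HT0; apply HTle; lra).
    assert (HTub : T u < st) by (rewrite <- HTb; apply HTi; lra).
    set (v := T u / st).
    assert (Hv : 0 <= v < 1).
    { unfold v. split. apply Rdiv_le_0_compat; lra.
      apply (Rmult_lt_reg_r st); auto. unfold Rdiv. rewrite Rmult_assoc, Rinv_l by lra. lra. }
    set (p := asin v).
    assert (Hp : 0 <= p < PI/2).
    { unfold p. destruct (asin_bound_lt v) as [_ H2]; try lra. split; auto.
      rewrite <- asin_0. destruct Hv as [[Hv0|Hv0] Hv1].
      - left. apply Rnot_le_lt. intros Hc.
        assert (sin (asin v) <= sin (asin 0)).
        { destruct Hc as [Hc|Hc]. left. apply sin_increasing_1; try lra; apply asin_bound.
          rewrite Hc; lra. }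
        rewrite !sin_asin in H by (split; lra). lra.
      - rewrite <- Hv0; lra. }
    assert (Hsinp : st * sin p = T u).
    { unfold p. rewrite sin_asin by (split; lra). unfold v. field. lra. }
    set (g := fun q => S (st * sin q)).
    set (dg := fun q => st * cos q * S' (st * sin q)).
    assert (Hcomp := is_RInt_comp f g dg 0 p).
    assert (Hg0 : g 0 = 0) by (unfold g; rewrite sin_0, Rmult_0_r; auto).
    assert (Hgp : g p = u) by (unfold g; rewrite Hsinp; auto).
    rewrite Hg0, Hgp in Hcomp.
    assert (Hbnd : forall q, Rmin 0 p <= q <= Rmax 0 p -> 0 <= q <= p).
    { intros q Hq. rewrite Rmin_left, Rmax_right in Hq by lra. auto. }
    assert (Hsinq : forall q, 0 <= q <= p -> 0 <= sin q <= sin p).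
    { intros q Hq. split. apply sin_ge_0; lra.
      destruct (Req_dec q p) as [Hqp|Hqp]. rewrite Hqp; lra. left; apply sin_increasing_1; lra. }
    assert (Hcosq : forall q, 0 <= q <= p -> 0 < cos q).
    { intros q Hq. apply cos_gt_0; lra. }
    specialize (Hcomp ltac:(intros q Hq; apply Hbnd in Hq; apply Hfc; unfold g;
      destruct (Hsinq q Hq); split;
      [ rewrite <- HS0; apply HSle; nra
      | unfold b; apply HSi; nra])).
    specialize (Hcomp ltac:(intros q Hq; split;
      [ unfold g, dg; apply is_derive_eq with (scal (st * cos q) (S' (st * sin q)));
        [ apply (is_derive_comp S (fun q => st * sin q)); [apply HS| auto_derive; auto; ring]
        | unfold scal; simpl; unfold mult; simpl; ring ]
      | unfold dg; apply cR_mult; [apply cR_mult; [apply cR_const|apply cR_cos]|];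
        apply (cR_comp (fun q => st * sin q) S'); [apply cR_mult; [apply cR_const|apply cR_sin]|apply HS'c]])).
    assert (Hh : is_RInt h 0 p (RInt f 0 u)).
    { apply (is_RInt_ext (fun y => scal (dg y) (f (g y)))); auto.
      intros q Hq. rewrite Rmin_left, Rmax_right in Hq by lra.
      assert (Hc := Hcosq q ltac:(lra)).
      unfold scal; simpl; unfold mult; simpl. unfold dg, f, g, h.
      rewrite HV, HTS.
      replace (theta - (st * sin q) ^ 2) with ((st * cos q) ^ 2).
      2: { rewrite <- Hst2. pose proof (sin2_cos2 q). unfold Rsqr in H. nra. }
      rewrite sqrt_pow2 by (apply Rmult_le_pos; lra).
      field. split; lra. }
    assert (Hex : ex_RInt f 0 u).
    { apply (ex_RInt_continuous f). intros z Hz. rewrite Rmin_left, Rmax_right in Hz by lra.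
      apply Hfc. lra. }
    replace (Phi p) with (RInt f 0 u). { apply (RInt_correct f); auto. }
    symmetry. exact (is_RInt_unique _ _ _ _ Hh). }
  unfold a_fun. rewrite Hinv. fold f.
  apply is_RInt_gen_unique.
  intros P [eps HP].
  assert (Hcont : continuous Phi (PI/2)).
  { apply (continuous_RInt_1 h 0 (PI/2) Phi). exists (mkposreal 1 Rlt_0_1). intros; apply HPhi. }
  destruct (proj1 (filterlim_locally Phi (Phi (PI/2))) Hcont eps) as [[eta Heta] Heps].
  simpl in Heps.
  set (p0 := Rmax 0 (PI/2 - eta/2)).
  assert (Hp0 : 0 <= p0 < PI/2) by (unfold p0, Rmax; destruct Rle_dec; pose proof PI_RGT_0; lra).
  assert (Hsp0 : 0 <= sin p0 < 1).
  { split. apply sin_ge_0; pose proof PI_RGT_0; lra. rewrite <- sin_PI2.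
    apply sin_increasing_1; pose proof PI_RGT_0; lra. }
  set (u0 := S (st * sin p0)).
  assert (Hu0 : 0 <= u0 < b).
  { unfold u0, b. split. rewrite <- HS0. apply HSle. nra. apply HSi. nra. }
  apply Filter_prod with (fun x => x = 0) (fun u => u0 < u < b).
  - reflexivity.
  - exists (mkposreal (b - u0) ltac:(simpl; lra)). intros y Hy Hyb.
    change (Rabs (y - b) < b - u0) in Hy. split; auto.
    rewrite Rabs_left in Hy by lra. lra.
  - intros x y -> Hy. simpl. exists (Phi (asin (T y / st))). split.
    + apply Hsub. lra.
    + apply HP. apply Heps.
      change (Rabs (asin (T y / st) - PI/2) < eta).
      assert (HTy : st * sin p0 < T y). { rewrite <- (HTS (st * sin p0)). apply HTi. fold u0. lra. }
      assert (HTyb : T y < st) by (rewrite <- HTb; apply HTi; lra).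
      assert (Hv : sin p0 < T y / st < 1).
      { split; apply (Rmult_lt_reg_r st); auto; unfold Rdiv; rewrite Rmult_assoc, Rinv_l by lra; lra. }
      assert (Ha : p0 < asin (T y / st)).
      { apply Rnot_le_lt. intros Hc.
        assert (sin (asin (T y / st)) <= sin p0).
        { destruct Hc as [Hc|Hc]. left. apply sin_increasing_1; try lra; try apply asin_bound; pose proof PI_RGT_0; lra.
          rewrite Hc; lra. }
        rewrite sin_asin in H by (split; lra); lra. }
      pose proof (asin_bound (T y / st)).
      rewrite Rabs_left1 by lra. unfold p0, Rmax in Ha; destruct Rle_dec in Ha; pose proof PI_RGT_0; lra.
Qed.

Definition Hn (k : R) (U : R -> R) (n : nat) (r : R) : R :=
  RInt (fun p => k * (sin p ^ n * Derive_n U n (r * sin p))) 0 (PI/2).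

Lemma cR_sinpow n x : continuous (fun p => sin p ^ n) x.
Proof. apply (ex_derive_continuous (fun p => sin p ^ n)). auto_derive; auto. Qed.

Lemma der_integrand (k : R) (G : R -> R) n t u :
  AN G -> is_derive (fun u => k * (sin t ^ n * G (u * sin t))) u (k * (sin t ^ (S n) * Derive G (u * sin t))).
Proof.
  intros HG.
  apply is_derive_eq with (k * (sin t ^ n * (sin t * Derive G (u * sin t)))).
  - apply is_derive_scal. apply is_derive_scal.
    apply is_derive_eq with (scal (sin t) (Derive G (u * sin t))).
    + apply (is_derive_comp G (fun u => u * sin t)). apply AN_is_derive; auto.
      auto_derive; auto; ring.
    + reflexivity.
  - simpl. ring.
Qed.

Lemma Hn_derive k U n r : AN U -> is_derive (Hn k U n) r (Hn k U (S n) r).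
Proof.
  intros HU. set (G := Derive_n U n).
  assert (HG : AN G) by (apply AN_Dn; auto).
  assert (HD : forall u t, Derive (fun z => k * (sin t ^ n * G (z * sin t))) u = k * (sin t ^ (S n) * Derive G (u * sin t))).
  { intros. apply is_derive_unique. apply der_integrand; auto. }
  unfold Hn. fold G.
  apply is_derive_eq with (RInt (fun t => Derive (fun u => k * (sin t ^ n * G (u * sin t))) r) 0 (PI/2)).
  - apply (is_derive_RInt_param (fun u t => k * (sin t ^ n * G (u * sin t)))).
    + exists (mkposreal 1 Rlt_0_1). intros y _ t _. eexists. apply der_integrand; auto.
    + intros t _. apply continuity_2d_pt_ext with (fun u v => k * (sin v ^ (S n) * Derive G (u * sin v))).
      { intros; rewrite HD; reflexivity. }
      apply continuity_2d_pt_mult. apply continuity_2d_pt_const.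
      apply continuity_2d_pt_mult.
      * apply (continuity_1d_2d_pt_comp (fun v => sin v ^ S n) (fun u v => v)).
        apply continuity_pt_filterlim. apply cR_sinpow. apply continuity_2d_pt_id2.
      * apply (continuity_1d_2d_pt_comp (Derive G) (fun u v => u * sin v)).
        apply continuity_pt_filterlim. apply AN_cont. apply an_Derive; auto.
        apply continuity_2d_pt_mult. apply continuity_2d_pt_id1.
        apply (continuity_1d_2d_pt_comp sin (fun u v => v)).
        apply continuity_pt_filterlim. apply cR_sin. apply continuity_2d_pt_id2.
    + exists (mkposreal 1 Rlt_0_1). intros y _.
      apply (ex_RInt_continuous (fun t => k * (sin t ^ n * G (y * sin t)))). intros z _.
      apply cR_mult. apply cR_const. apply cR_mult. apply cR_sinpow.
      apply (cR_comp (fun t => y * sin t) G). apply cR_mult. apply cR_const. apply cR_sin.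
      apply AN_cont; auto.
  - apply RInt_ext. intros x _. rewrite HD. reflexivity.
Qed.

Lemma Dn_Hn k U n r : AN U -> Derive_n (Hn k U 0) n r = Hn k U n r.
Proof.
  intros HU. revert r. induction n; intros r. { reflexivity. }
  simpl. rewrite (Derive_ext _ (Hn k U n)) by auto.
  apply is_derive_unique. apply Hn_derive; auto.
Qed.

Lemma Dn_Hn_ex k U n r : AN U -> ex_derive (Derive_n (Hn k U 0) n) r.
Proof.
  intros HU. exists (Hn k U (S n) r).
  apply is_derive_ext with (Hn k U n). { intros; symmetry; apply Dn_Hn; auto. }
  apply Hn_derive; auto.
Qed.

Definition mom n := RInt (fun p => sin p ^ n) 0 (PI/2).

Lemma mom_pos n : 0 < mom n.
Proof.
  unfold mom. pose proof PI_RGT_0.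
  apply RInt_gt_0. lra.
  - intros x Hx. apply pow_lt. apply sin_gt_0; lra.
  - intros; apply cR_sinpow.
Qed.

Lemma Hn_0 k U n : Hn k U n 0 = k * Derive_n U n 0 * mom n.
Proof.
  unfold Hn, mom.
  rewrite (RInt_ext _ (fun p => scal (k * Derive_n U n 0) (sin p ^ n))).
  - apply is_RInt_unique. apply (is_RInt_scal (fun p => sin p ^ n)). apply (RInt_correct (fun p => sin p ^ n)).
    apply (ex_RInt_continuous (fun p => sin p ^ n)). intros; apply cR_sinpow.
  - intros x _. rewrite Rmult_0_l. unfold scal; simpl; unfold mult; simpl. ring.
Qed.

Lemma AN_ext f g : (forall x, f x = g x) -> AN f -> AN g.
Proof.
  intros Heq Hf x0. destruct (Hf x0) as [r [Hr [c Hc]]].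
  exists r. split; auto. exists c. intros x Hx. rewrite <- Heq. auto.
Qed.

Lemma AN_comb f g a b : AN f -> AN g -> AN (fun x => a * f x + b * g x).
Proof.
  intros Hf Hg x0. destruct (Hf x0) as [r1 [Hr1 [c1 Hc1]]]. destruct (Hg x0) as [r2 [Hr2 [c2 Hc2]]].
  exists (Rmin r1 r2). split. { apply Rmin_glb_lt; auto. }
  exists (fun n => a * c1 n + b * c2 n). intros x Hx.
  assert (H1 := Hc1 x ltac:(eapply Rlt_le_trans; [exact Hx| apply Rmin_l])).
  assert (H2 := Hc2 x ltac:(eapply Rlt_le_trans; [exact Hx| apply Rmin_r])).
  apply is_pseries_R in H1. apply is_pseries_R in H2. apply is_pseries_R.
  assert (Hs := @is_series_plus R_AbsRing R_NormedModule _ _ _ _ (is_series_scal_r a _ _ H1) (is_series_scal_r b _ _ H2)).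
  replace (a * f x + b * g x) with (plus (f x * a) (g x * b)) by (unfold plus; simpl; ring).
  apply is_series_ext with (2 := Hs). intros n. unfold plus; simpl. ring.
Qed.

Lemma AN_opp f : AN f -> AN (fun x => f (- x)).
Proof.
  intros Hf x0. destruct (Hf (- x0)) as [r [Hr [c Hc]]].
  exists r. split; auto. exists (fun n => (-1)^n * c n). intros x Hx.
  assert (H := Hc (- x) ltac:(replace (- x - - x0) with (- (x - x0)) by ring; rewrite Rabs_Ropp; auto)).
  apply is_pseries_R in H. apply is_pseries_R.
  replace (- x - - x0) with ((-1) * (x - x0)) in H by ring.
  apply is_series_ext with (2 := H). intros n. rewrite Rpow_mult_distr. rewrite <- Rmult_assoc, (Rmult_comm (c n)). reflexivity.
Qed.

Lemma AN_ex_n f k y : AN f -> ex_derive_n f k y.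
Proof. intros H. destruct k; simpl; auto. apply AN_ex_derive, AN_Dn, H. Qed.

Lemma is_pseries_zero x : is_pseries (fun _ : nat => 0) x 0.
Proof.
  apply is_pseries_R. apply is_series_ext with (fun k => scal (pow_n (K:=R_AbsRing) zero k) (0:R)).
  { intros n. unfold scal; simpl; unfold mult; simpl. ring. }
  apply (is_pseries_0 (fun _ : nat => (0:R))).
Qed.

Lemma agree0 (f g : R -> R) d : 0 < d -> continuous f 0 -> continuous g 0 ->
  (forall r, 0 < r < d -> f r = g r) -> f 0 = g 0.
Proof.
  intros Hd Hf Hg Heq. apply NNPP. intros Hne.
  assert (Hp : 0 < Rabs (f 0 - g 0) / 2) by (apply Rdiv_lt_0_compat; [apply Rabs_pos_lt; lra| lra]).
  destruct (cont_eps f 0 Hf _ Hp) as [d1 [Hd1 H1]].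
  destruct (cont_eps g 0 Hg _ Hp) as [d2 [Hd2 H2]].
  set (r := Rmin d (Rmin d1 d2) / 2).
  assert (Hm : 0 < Rmin d (Rmin d1 d2)) by (repeat apply Rmin_glb_lt; auto).
  assert (Hr1 : r < d) by (unfold r; pose proof (Rmin_l d (Rmin d1 d2)); lra).
  assert (Hr2 : r < d1) by (unfold r; pose proof (Rmin_l d (Rmin d1 d2)); pose proof (Rmin_r d (Rmin d1 d2)); pose proof (Rmin_l d1 d2); lra).
  assert (Hr3 : r < d2) by (unfold r; pose proof (Rmin_l d (Rmin d1 d2)); pose proof (Rmin_r d (Rmin d1 d2)); pose proof (Rmin_r d1 d2); lra).
  assert (Hr0 : 0 < r) by (unfold r; lra).
  assert (E1 := H1 r ltac:(rewrite Rminus_0_r, Rabs_pos_eq; lra)).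
  assert (E2 := H2 r ltac:(rewrite Rminus_0_r, Rabs_pos_eq; lra)).
  rewrite Heq in E1 by lra.
  pose proof (Rabs_triang (f 0 - g r) (g r - g 0)).
  replace (f 0 - g r + (g r - g 0)) with (f 0 - g 0) in H by ring.
  rewrite <- Rabs_Ropp in E1. replace (- (g r - f 0)) with (f 0 - g r) in E1 by ring.
  lra.
Qed.

Lemma cR_opp x : continuous Ropp x.
Proof. apply (ex_derive_continuous Ropp x). auto_derive; auto. Qed.

Theorem lemma5 (V Vs W : R -> R) (gamma gammab : R) :
  UM V -> deg_at0 V 2 ->
  analytic_on (fun _ => True) Vs -> analytic_on (fun _ => True) W ->
  (forall y, 0 < Derive Vs y) ->
  (forall y, Vs y ^ 2 = V y) ->
  (forall y, W (Vs y) = y) -> (forall x, Vs (W x) = x) ->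
  0 <= gamma -> 0 <= gammab -> 0 < gamma + gammab ->
  (exists (O : R -> Prop) (F : R -> R),
      open O /\ (forall t, 0 <= t -> O t) /\ analytic_on O F /\
      (forall t, 0 < t ->
         F t = gamma * a_fun V t + gammab * a_fun (Vbar V) t)) ->
  let U := fun x => gamma * Derive W x + gammab * Derive W (- x) in
  (forall x, U (- x) = U x) /\
  (~ (forall y, V (- y) = V y) -> gamma = gammab).
Proof.
  intros HUM Hdeg HVs HW HdVs HVsV HWVs HVsW Hg Hgb Hgg [O [F [HO [HO0 [HF HFa]]]]] U.
  assert (ANVs : AN Vs) by (intros x; apply HVs; exact I).
  assert (ANW : AN W) by (intros x; apply HW; exact I).
  destruct HUM as [_ [_ [HV0 _]]].
  assert (HVs0 : Vs 0 = 0). { pose proof (HVsV 0) as H. rewrite HV0 in H. simpl in H. nra. }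
  assert (HVsi : forall x y, x < y -> Vs x < Vs y).
  { apply (incr_deriv Vs (Derive Vs)); auto. intros; apply AN_is_derive; auto. }
  assert (HWi : forall x y, x < y -> W x < W y).
  { intros x y Hxy. apply Rnot_le_lt. intros Hc. destruct Hc as [Hc|Hc].
    - apply HVsi in Hc. rewrite !HVsW in Hc. lra.
    - apply (f_equal Vs) in Hc. rewrite !HVsW in Hc. lra. }
  set (k := / sqrt 2).
  assert (Hsq2 : 0 < sqrt 2) by (apply sqrt_lt_R0; lra).
  assert (ANDW : AN (Derive W)) by (apply an_Derive; auto).
  assert (ANU : AN U).
  { unfold U. apply (AN_comb (Derive W) (fun x => Derive W (-x))); auto. apply AN_opp; auto. }
  assert (Hsub1 : forall theta, 0 < theta -> a_fun V theta = RInt (fun p => Derive W (sqrt theta * sin p) / sqrt 2) 0 (PI/2)).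
  { intros th Hth. refine (a_fun_subst V Vs W (Derive W) th Hth _ HWVs HVsW HVsi HWi HVs0 _ _ _).
    - intros; symmetry; apply HVsV.
    - intros; apply AN_cont; auto.
    - intros; apply AN_is_derive; auto.
    - intros; apply AN_cont; auto. }
  assert (Hsub2 : forall theta, 0 < theta -> a_fun (Vbar V) theta = RInt (fun p => Derive W (- (sqrt theta * sin p)) / sqrt 2) 0 (PI/2)).
  { intros th Hth. refine (a_fun_subst (Vbar V) (fun y => - Vs (- y)) (fun x => - W (- x)) (fun x => Derive W (- x)) th Hth _ _ _ _ _ _ _ _ _).
    - intros y. unfold Vbar. rewrite <- HVsV. ring.
    - intros y. rewrite Ropp_involutive, HWVs. ring.
    - intros x. rewrite Ropp_involutive, HVsW. ring.
    - intros x y Hxy. apply Ropp_lt_contravar. apply HVsi. lra.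
    - intros x y Hxy. apply Ropp_lt_contravar. apply HWi. lra.
    - rewrite Ropp_0, HVs0. ring.
    - intros x. apply (continuous_opp (fun y => Vs (- y))). apply (cR_comp Ropp Vs). apply cR_opp. apply AN_cont; auto.
    - intros x. apply is_derive_eq with (opp (scal (-1) (Derive W (- x)))).
      + apply (is_derive_opp (fun x => W (- x))). apply (is_derive_comp W Ropp). apply AN_is_derive; auto.
        auto_derive; auto.
      + unfold opp, scal; simpl; unfold mult; simpl. ring.
    - intros x. apply (cR_comp Ropp (Derive W)). apply cR_opp. apply AN_cont; auto. }
  assert (HFH : forall r, 0 < r -> F (r ^ 2) = Hn k U 0 r).
  { intros r Hr. assert (Hr2 : 0 < r^2) by nra.
    rewrite HFa by auto. rewrite Hsub1, Hsub2 by auto. rewrite sqrt_pow2 by lra.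
    unfold Hn. symmetry. apply is_RInt_unique.
    assert (E1 := RInt_correct (fun p => Derive W (r * sin p) / sqrt 2) 0 (PI/2)
      ltac:(apply (ex_RInt_continuous (fun p => Derive W (r * sin p) / sqrt 2)); intros z _;
            apply cR_mult; [|apply cR_const]; apply (cR_comp (fun p => r * sin p) (Derive W));
            [apply cR_mult; [apply cR_const|apply cR_sin]|apply AN_cont; auto])).
    assert (E2 := RInt_correct (fun p => Derive W (- (r * sin p)) / sqrt 2) 0 (PI/2)
      ltac:(apply (ex_RInt_continuous (fun p => Derive W (- (r * sin p)) / sqrt 2)); intros z _;
            apply cR_mult; [|apply cR_const]; apply (cR_comp (fun p => - (r * sin p)) (Derive W));
            [apply (cR_comp (fun p => r * sin p) Ropp); [apply cR_mult; [apply cR_const|apply cR_sin]|apply cR_opp]|apply AN_cont; auto])).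
    assert (E := @is_RInt_plus R_NormedModule _ _ _ _ _ _ (is_RInt_scal _ _ _ gamma _ E1) (is_RInt_scal _ _ _ gammab _ E2)).
    replace (gamma * RInt (fun p => Derive W (r * sin p) / sqrt 2) 0 (PI / 2) +
      gammab * RInt (fun p => Derive W (- (r * sin p)) / sqrt 2) 0 (PI / 2)) with
      (plus (scal gamma (RInt (fun p => Derive W (r * sin p) / sqrt 2) 0 (PI / 2)))
            (scal gammab (RInt (fun p => Derive W (- (r * sin p)) / sqrt 2) 0 (PI / 2))))
      by (unfold plus, scal; simpl; unfold mult; simpl; ring).
    apply (is_RInt_ext _ _ _ _ _ (fun x _ => eq_refl _)) in E.
    apply is_RInt_ext with (2 := E). intros p _.
    unfold plus, scal; simpl; unfold mult; simpl. unfold U, k. field. lra. }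
  destruct (HF 0 (HO0 0 (Rle_refl 0))) as [rF [HrF [c Hc]]].
  set (e := fun n => if Nat.even n then c (Nat.div2 n) else 0).
  set (rho := Rmin rF 1).
  assert (Hrho : 0 < rho) by (apply Rmin_glb_lt; lra).
  assert (Hser : forall x, Rabs (x - 0) < rho -> is_pseries e (x - 0) (F (x ^ 2))).
  { intros x Hx. rewrite Rminus_0_r in *.
    replace (F (x^2)) with (F (x^2) + x * 0) by ring.
    apply is_pseries_odd_even.
    - apply is_pseries_ext with c.
      { intros n. unfold e. rewrite Nat.div2_double, Nat.even_mul. reflexivity. }
      assert (H := Hc (x^2)). rewrite Rminus_0_r in H. apply H.
      assert (Hx1 : Rabs x < 1) by (eapply Rlt_le_trans; [exact Hx|apply Rmin_r]).
      assert (HxF : Rabs x < rF) by (eapply Rlt_le_trans; [exact Hx|apply Rmin_l]).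
      rewrite <- RPow_abs. pose proof (Rabs_pos x). simpl. nra.
    - apply is_pseries_ext with (fun _ => 0).
      { intros n. unfold e. rewrite Nat.even_add, Nat.even_mul. reflexivity. }
      apply is_pseries_zero. }
  assert (Hrad : forall z, Rabs z < rho -> Rbar_lt (Rabs z) (CV_radius e))
    by (apply (an_rad (fun x => F (x^2)) 0 rho e Hser)).
  assert (HK : forall r, 0 < r < rho -> Hn k U 0 r = PSeries e r).
  { intros r Hr. rewrite <- HFH by lra. symmetry. apply is_pseries_unique.
    assert (H := Hser r ltac:(rewrite Rminus_0_r, Rabs_pos_eq; lra)). rewrite Rminus_0_r in H. exact H. }
  assert (Hodd : forall n, Nat.Odd n -> Derive_n U n 0 = 0).
  { intros n Hn0.
    assert (Heq : Derive_n (Hn k U 0) n 0 = Derive_n (PSeries e) n 0).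
    { apply (agree0 _ _ rho); auto.
      - apply (ex_derive_continuous (Derive_n (Hn k U 0) n)). apply Dn_Hn_ex; auto.
      - apply continuous_ext_loc with (PSeries (PS_derive_n n e)).
        + exists (mkposreal rho Hrho). intros y Hy. change (Rabs (y - 0) < rho) in Hy.
          rewrite Rminus_0_r in Hy. symmetry. apply Derive_n_PSeries. apply Hrad; auto.
        + apply (ex_derive_continuous (PSeries (PS_derive_n n e))). apply ex_derive_PSeries. rewrite CV_radius_derive_n.
          apply Hrad. rewrite Rabs_R0; auto.
      - intros r Hr. apply Derive_n_ext_loc.
        assert (Hd : 0 < Rmin r (rho - r)) by (apply Rmin_glb_lt; lra).
        exists (mkposreal _ Hd). intros y Hy. change (Rabs (y - r) < Rmin r (rho - r)) in Hy.
        apply HK. pose proof (Rmin_l r (rho - r)). pose proof (Rmin_r r (rho - r)).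
        apply Rabs_def2 in Hy. lra. }
    rewrite Dn_Hn, Hn_0 in Heq by auto.
    rewrite Derive_n_coef in Heq by (rewrite <- Rabs_R0; apply Hrad; rewrite Rabs_R0; auto).
    assert (He : e n = 0). { destruct Hn0 as [m ->]. unfold e. rewrite Nat.even_add, Nat.even_mul. reflexivity. }
    rewrite He, Rmult_0_l in Heq.
    pose proof (mom_pos n).
    assert (Hk : k <> 0) by (unfold k; apply Rinv_neq_0_compat; lra).
    apply Rmult_integral in Heq. destruct Heq as [Heq|Heq]; [|lra].
    apply Rmult_integral in Heq. destruct Heq as [Heq|Heq]; [contradiction|auto]. }
  assert (Hodd0 : forall x, U x - U (- x) = 0).
  { apply (AN_zero (fun x => U x - U (- x))).
    - apply (AN_ext (fun x => 1 * U x + (-1) * U (- x))). { intros; ring. }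
      apply AN_comb; auto. apply AN_opp; auto.
    - intros n.
      rewrite Derive_n_minus.
      2: { exists (mkposreal 1 Rlt_0_1). intros; apply AN_ex_n; auto. }
      2: { exists (mkposreal 1 Rlt_0_1). intros; apply AN_ex_n; apply AN_opp; auto. }
      rewrite Derive_n_comp_opp.
      2: { exists (mkposreal 1 Rlt_0_1). intros; apply AN_ex_n; auto. }
      rewrite Ropp_0.
      destruct (Nat.Even_or_Odd n) as [[m ->]|Ho].
      + rewrite pow_mult. replace ((-1)^2) with 1 by ring. rewrite pow1. ring.
      + rewrite Hodd; auto. ring. }
  assert (Heven : forall x, U (- x) = U x) by (intros x; pose proof (Hodd0 x); lra).
  split; auto.
  intros Hne. destruct (Req_dec gamma gammab) as [|Hgne]; auto. exfalso. apply Hne.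
  assert (HWe : forall x, Derive W (- x) = Derive W x).
  { intros x. pose proof (Heven x) as H. unfold U in H. rewrite Ropp_involutive in H.
    assert (H2 : (gamma - gammab) * (Derive W (-x) - Derive W x) = 0) by lra.
    apply Rmult_integral in H2. destruct H2; lra. }
  assert (HWo : forall x, W (- x) = - W x).
  { intros x. set (g := fun y => W y + W (- y)).
    assert (Hgd : forall y, is_derive g y 0).
    { intros y. unfold g. apply is_derive_eq with (plus (Derive W y) (scal (-1) (Derive W (- y)))).
      - apply (is_derive_plus W (fun y => W (- y))). apply AN_is_derive; auto.
        apply (is_derive_comp W Ropp). apply AN_is_derive; auto. auto_derive; auto.
      - rewrite HWe. unfold plus, scal; simpl; unfold mult; simpl. ring. }
    assert (HI := is_RInt_derive g (fun _ => 0) 0 x (fun y _ => Hgd y) (fun y _ => cR_const 0 y)).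
    assert (HI0 := is_RInt_const 0 x (0:R)).
    assert (Hm := is_RInt_unique _ _ _ _ HI). rewrite (is_RInt_unique _ _ _ _ HI0) in Hm.
    unfold g, minus, plus, opp, scal in Hm; simpl in Hm; unfold mult in Hm; simpl in Hm.
    rewrite Ropp_0, Rmult_0_r in Hm. 
    assert (HW0 : W 0 = 0) by (pose proof (HWVs 0) as H0; rewrite HVs0 in H0; exact H0).
    rewrite HW0 in Hm. lra. }
  intros y. rewrite <- !HVsV.
  assert (E : - y = W (- Vs y)) by (rewrite HWo, HWVs; ring).
  rewrite E, HVsW. ring.
Qed.
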